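(* Let $\{\tilde\alpha,\tilde\beta\}$ be a dual timelike - spacelike Mannheim pair in $ID_1^3$, and let $\Phi$ be the dual angle between the dual tangent vectors $T$ of $\tilde\alpha$ and $V_1$ of $\tilde\beta$, so that $V_1=\sinh\Phi\,T+\cosh\Phi\,N$ and $V_3=\cosh\Phi\,T+\sinh\Phi\,N$. Then the dual curvatures and torsions of $\tilde\alpha$ and $\tilde\beta$ satisfy (i) $\kappa=-\dfrac{d\Phi}{ds}$; (ii) $\tau=P\cosh\Phi\,\dfrac{ds^*}{ds}-Q\sinh\Phi\,\dfrac{ds^*}{ds}$; (iii) $P=\tau\cosh\Phi\,\dfrac{ds}{ds^*}$; (iv) $Q=\tau\sinh\Phi\,\dfrac{ds}{ds^*}$.
   Context: Dual numbers: $ID=\{a+\varepsilon a^*: a,a^*\in\mathbb R\}$ with $\varepsilon^2=0$; differentiable functions extend by $f(a+\varepsilon a^* )=f(a)+\varepsilon a^* f'(a)$, so e.g. $\sinh(\varphi+\varepsilon\varphi^* )=\sinh\varphi+\varepsilon\varphi^*\cosh\varphi$, $\cosh(\varphi+\varepsilon\varphi^* )=\cosh\varphi+\varepsilon\varphi^*\sinh\varphi$. $ID_1^3$ is $ID^3$ with dual Lorentzian inner product $\langle \vec A,\vec B\rangle=\langle\vec a,\vec b\rangle+\varepsilon(\langle\vec a,\vec b^*\rangle+\langle\vec a^*,\vec b\rangle)$, $\langle\vec a,\vec b\rangle=-a_1b_1+a_2b_2+a_3b_3$. $\tilde\alpha$ is a dual timelike curve with dual arc length $s$, Frenet frame $\{T,N,B\}$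 ($T$ timelike, $N,B$ spacelike unit), $T'=\kappa N$, $N'=\kappa T+\tau B$, $B'=-\tau N$, dual curvature $\kappa$ and dual torsion $\tau$. $\tilde\beta$ is a dual spacelike curve with dual timelike binormal, arc length $s^*$, frame $\{V_1,V_2,V_3\}$ ($V_3$ timelike), $V_1'=PV_2$, $V_2'=-PV_1+QV_3$, $V_3'=QV_2$ (derivatives in $s^*$), dual curvature $P$ and dual torsion $Q$. A dual timelike - spacelike Mannheim pair means that under a correspondence $s\mapsto s^*$ the dual binormal line of $\tilde\alpha$ coincides with the dual principal normal line of $\tilde\beta$ at corresponding points, i.e. $\tilde\beta(s^* )=\tilde\alpha(s)+\lambda B(s)$. *)

(* Defs.v *)
From Stdlib Require Import Reals.
From Coquelicot Require Import Coquelicot.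
Open Scope R_scope.

(** Dual numbers a + eps b, eps^2 = 0. *)
Record dual := mkD { re : R ; du : R }.

Definition dual_add (x y : dual) : dual := mkD (re x + re y) (du x + du y).
Definition dual_opp (x : dual) : dual := mkD (- re x) (- du x).
Definition dual_sub (x y : dual) : dual := dual_add x (dual_opp y).
Definition dual_mul (x y : dual) : dual :=
  mkD (re x * re y) (re x * du y + du x * re y).
(** inverse, meaningful when re x <> 0: 1/(a + eps b) = 1/a - eps b/a^2 *)
Definition dual_inv (x : dual) : dual := mkD (/ re x) (- du x / (re x * re x)).
Definition dual_div (x y : dual) : dual := dual_mul x (dual_inv y).
Definition dual_const (r : R) : dual := mkD r 0.

(** extension of differentiable functions: f(a + eps b) = f a + eps b f`(a) *)
Definition dual_sinh (x : dual) : dual := mkD (sinh (re x)) (du x * cosh (re x)).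
Definition dual_cosh (x : dual) : dual := mkD (cosh (re x)) (du x * sinh (re x)).

Record dvec := mkV { v1 : dual ; v2 : dual ; v3 : dual }.

Definition Vadd (A B : dvec) : dvec :=
  mkV (dual_add (v1 A) (v1 B)) (dual_add (v2 A) (v2 B)) (dual_add (v3 A) (v3 B)).
Definition Vscale (c : dual) (A : dvec) : dvec :=
  mkV (dual_mul c (v1 A)) (dual_mul c (v2 A)) (dual_mul c (v3 A)).

Definition Lip (A B : dvec) : dual :=
  dual_add (dual_opp (dual_mul (v1 A) (v1 B))) (dual_add (dual_mul (v2 A) (v2 B)) (dual_mul (v3 A) (v3 B))).

Definition dual_deriv (f f' : R -> dual) : Prop :=
  forall t, is_derive (fun u => re (f u)) t (re (f' t))
         /\ is_derive (fun u => du (f u)) t (du (f' t)).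

Definition Vderiv (F F' : R -> dvec) : Prop :=
  dual_deriv (fun t => v1 (F t)) (fun t => v1 (F' t)) /\
  dual_deriv (fun t => v2 (F t)) (fun t => v2 (F' t)) /\
  dual_deriv (fun t => v3 (F t)) (fun t => v3 (F' t)).

Definition dual_0 : dual := dual_const 0.
Definition dual_1 : dual := dual_const 1.

Definition orthonormal_frame (E1 E2 E3 : dvec) (s1 s2 s3 : R) : Prop :=
  Lip E1 E1 = dual_const s1 /\ Lip E2 E2 = dual_const s2 /\ Lip E3 E3 = dual_const s3 /\
  Lip E1 E2 = dual_0 /\ Lip E1 E3 = dual_0 /\ Lip E2 E3 = dual_0.

(** Dual timelike curve alpha(t) with dual speed ds/dt = sp t and Frenet frame
    {T,N,B} (T timelike, N,B spacelike unit):
    alpha' = sp T, and with respect to dual arc length s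
    T' = k N, N' = k T + tau B, B' = - tau N  (d/ds = (1/sp) d/dt). *)
Definition timelike_Frenet (alpha : R -> dvec) (sp : R -> dual)
  (T N B : R -> dvec) (k tau : R -> dual) : Prop :=
  (forall t, 0 < re (sp t)) /\
  (forall t, orthonormal_frame (T t) (N t) (B t) (-1) 1 1) /\
  Vderiv alpha (fun t => Vscale (sp t) (T t)) /\
  Vderiv T (fun t => Vscale (dual_mul (sp t) (k t)) (N t)) /\
  Vderiv N (fun t => Vscale (sp t)
              (Vadd (Vscale (k t) (T t)) (Vscale (tau t) (B t)))) /\
  Vderiv B (fun t => Vscale (dual_mul (sp t) (dual_opp (tau t))) (N t)).

(** Dual spacelike curve beta(t) with dual timelike binormal, dual speed
    ds*/dt = sps t and frame {V1,V2,V3} (V3 timelike):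
    beta' = sps V1, and with respect to s*:
    V1' = P V2, V2' = -P V1 + Q V3, V3' = Q V2. *)
Definition spacelike_tb_Frenet (beta : R -> dvec) (sps : R -> dual)
  (V1 V2 V3 : R -> dvec) (P Q : R -> dual) : Prop :=
  (forall t, 0 < re (sps t)) /\
  (forall t, orthonormal_frame (V1 t) (V2 t) (V3 t) 1 1 (-1)) /\
  Vderiv beta (fun t => Vscale (sps t) (V1 t)) /\
  Vderiv V1 (fun t => Vscale (dual_mul (sps t) (P t)) (V2 t)) /\
  Vderiv V2 (fun t => Vscale (sps t)
              (Vadd (Vscale (dual_opp (P t)) (V1 t)) (Vscale (Q t) (V3 t)))) /\
  Vderiv V3 (fun t => Vscale (dual_mul (sps t) (Q t)) (V2 t)).

(** Dual timelike - spacelike Mannheim pair: at corresponding points (same t)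
    the binormal line of alpha coincides with the principal normal line of beta:
    beta = alpha + lambda B, and B = V2. *)
Definition Mannheim_pair (alpha beta : R -> dvec) (B V2 : R -> dvec)
  (lambda : R -> dual) : Prop :=
  forall t, beta t = Vadd (alpha t) (Vscale (lambda t) (B t)) /\ V2 t = B t.

(* Main.v *)
Require Import Defs.
From Stdlib Require Import Reals Lra FunctionalExtensionality.
From Coquelicot Require Import Coquelicot.
Open Scope R_scope.

Lemma dual_eq (x y : dual) : re x = re y -> du x = du y -> x = y.
Proof. destruct x, y; simpl; intros; subst; reflexivity. Qed.

Lemma dual_ring : ring_theory dual_0 dual_1 dual_add dual_mul dual_sub dual_opp (@eq dual).
Proof.
  constructor; intros; repeat match goal with d : dual |- _ => destruct d end;
  apply dual_eq; simpl; ring.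
Qed.
Add Ring dual_ring : dual_ring.

Lemma is_derive_eq (f : R -> R) x l l' : is_derive f x l -> l = l' -> is_derive f x l'.
Proof. intros H ->; exact H. Qed.

Lemma dd_add f f' g g' : dual_deriv f f' -> dual_deriv g g' ->
  dual_deriv (fun t => dual_add (f t) (g t)) (fun t => dual_add (f' t) (g' t)).
Proof.
  intros H G t; destruct (H t) as [H1 H2]; destruct (G t) as [G1 G2]; simpl; split.
  - exact (is_derive_plus _ _ _ _ _ H1 G1).
  - exact (is_derive_plus _ _ _ _ _ H2 G2).
Qed.

Lemma dd_mul f f' g g' : dual_deriv f f' -> dual_deriv g g' ->
  dual_deriv (fun t => dual_mul (f t) (g t))
    (fun t => dual_add (dual_mul (f' t) (g t)) (dual_mul (f t) (g' t))).
Proof.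
  intros H G t; destruct (H t) as [H1 H2]; destruct (G t) as [G1 G2]; simpl; split.
  - eapply is_derive_eq. apply (is_derive_mult _ _ _ _ _ H1 G1).
    intros; apply Rmult_comm. simpl. unfold plus, mult; simpl. ring.
  - eapply is_derive_eq.
    apply (is_derive_plus _ _ _ _ _ (is_derive_mult _ _ _ _ _ H1 G2 Rmult_comm)
              (is_derive_mult _ _ _ _ _ H2 G1 Rmult_comm)).
    simpl. unfold plus, mult; simpl. ring.
Qed.

Lemma is_derive_sinh (f : R -> R) x l : is_derive f x l ->
  is_derive (fun u => sinh (f u)) x (l * cosh (f x)).
Proof.
  intro H. eapply is_derive_eq. apply (is_derive_comp sinh f). 
  apply is_derive_Reals, derivable_pt_lim_sinh. exact H.
  reflexivity.
Qed.

Lemma is_derive_cosh (f : R -> R) x l : is_derive f x l ->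
  is_derive (fun u => cosh (f u)) x (l * sinh (f x)).
Proof.
  intro H. eapply is_derive_eq. apply (is_derive_comp cosh f). 
  apply is_derive_Reals, derivable_pt_lim_cosh. exact H.
  reflexivity.
Qed.

Lemma dd_sinh f f' : dual_deriv f f' ->
  dual_deriv (fun t => dual_sinh (f t)) (fun t => dual_mul (dual_cosh (f t)) (f' t)).
Proof.
  intros H t; destruct (H t) as [H1 H2]; simpl; split.
  - eapply is_derive_eq. apply (is_derive_sinh _ _ _ H1). simpl; ring.
  - eapply is_derive_eq.
    apply (is_derive_mult _ _ _ _ _ H2 (is_derive_cosh _ _ _ H1) Rmult_comm).
    simpl. unfold plus, mult; simpl. ring.
Qed.

Lemma dd_cosh f f' : dual_deriv f f' ->
  dual_deriv (fun t => dual_cosh (f t)) (fun t => dual_mul (dual_sinh (f t)) (f' t)).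
Proof.
  intros H t; destruct (H t) as [H1 H2]; simpl; split.
  - eapply is_derive_eq. apply (is_derive_cosh _ _ _ H1). simpl; ring.
  - eapply is_derive_eq.
    apply (is_derive_mult _ _ _ _ _ H2 (is_derive_sinh _ _ _ H1) Rmult_comm).
    simpl. unfold plus, mult; simpl. ring.
Qed.

Lemma Vd_add F F' G G' : Vderiv F F' -> Vderiv G G' ->
  Vderiv (fun t => Vadd (F t) (G t)) (fun t => Vadd (F' t) (G' t)).
Proof.
  intros [H1 [H2 H3]] [G1 [G2 G3]]; refine (conj _ (conj _ _)).
  exact (dd_add _ _ _ _ H1 G1). exact (dd_add _ _ _ _ H2 G2). exact (dd_add _ _ _ _ H3 G3).
Qed.

Lemma Vd_scale c c' F F' : dual_deriv c c' -> Vderiv F F' ->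
  Vderiv (fun t => Vscale (c t) (F t))
    (fun t => Vadd (Vscale (c' t) (F t)) (Vscale (c t) (F' t))).
Proof.
  intros C [H1 [H2 H3]]; refine (conj _ (conj _ _)).
  exact (dd_mul _ _ _ _ C H1). exact (dd_mul _ _ _ _ C H2). exact (dd_mul _ _ _ _ C H3).
Qed.

Lemma dd_unique f f1 f2 : dual_deriv f f1 -> dual_deriv f f2 -> forall t, f1 t = f2 t.
Proof.
  intros H G t; destruct (H t) as [H1 H2]; destruct (G t) as [G1 G2].
  apply dual_eq.
  - apply is_derive_unique in H1; apply is_derive_unique in G1; congruence.
  - apply is_derive_unique in H2; apply is_derive_unique in G2; congruence.
Qed.

Lemma Vd_unique F F1 F2 : Vderiv F F1 -> Vderiv F F2 -> forall t, F1 t = F2 t.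
Proof.
  intros [H1 [H2 H3]] [G1 [G2 G3]] t.
  destruct (F1 t) eqn:E1, (F2 t) eqn:E2. f_equal.
  - pose proof (dd_unique _ _ _ H1 G1 t); simpl in *; rewrite E1, E2 in *; auto.
  - pose proof (dd_unique _ _ _ H2 G2 t); simpl in *; rewrite E1, E2 in *; auto.
  - pose proof (dd_unique _ _ _ H3 G3 t); simpl in *; rewrite E1, E2 in *; auto.
Qed.

Lemma Lip_add_r A X Y : Lip A (Vadd X Y) = dual_add (Lip A X) (Lip A Y).
Proof. destruct A, X, Y; unfold Lip; simpl; ring. Qed.
Lemma Lip_scale_r A c X : Lip A (Vscale c X) = dual_mul c (Lip A X).
Proof. destruct A, X; unfold Lip; simpl; ring. Qed.
Lemma Lip_sym A X : Lip A X = Lip X A.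
Proof. destruct A, X; unfold Lip; simpl; ring. Qed.

Lemma dual_cancel a x y : re a <> 0 -> dual_mul a x = y -> x = dual_mul y (dual_inv a).
Proof.
  intros Ha <-. destruct a, x; simpl in *. apply dual_eq; simpl; field; auto.
Qed.

Lemma dual_mul_inv a : re a <> 0 -> dual_mul a (dual_inv a) = dual_1.
Proof. intros Ha; destruct a; simpl in *; apply dual_eq; simpl; field; auto. Qed.

Lemma dual_ch_sh x : dual_sub (dual_mul (dual_cosh x) (dual_cosh x))
   (dual_mul (dual_sinh x) (dual_sinh x)) = dual_1.
Proof.
  destruct x as [a b]; apply dual_eq; simpl.
  - unfold cosh, sinh. assert (exp a * exp (- a) = 1).
    { rewrite <- exp_plus. replace (a + - a) with 0 by ring. apply exp_0. }
    nra.
  - ring.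
Qed.

Lemma cosh_pos x : 0 < cosh x.
Proof. unfold cosh. pose proof (exp_pos x); pose proof (exp_pos (-x)); lra. Qed.

Lemma eq_sub (a b : dual) : a = b -> dual_sub a b = dual_0.
Proof. intros ->; ring. Qed.

Lemma sub_eq (a b : dual) : dual_sub a b = dual_0 -> a = b.
Proof. intro H. transitivity (dual_add (dual_sub a b) b); [ring|]. rewrite H; ring. Qed.

Lemma mul_zero_cancel a x : re a <> 0 -> dual_mul a x = dual_0 -> x = dual_0.
Proof. intros Ha H. rewrite (dual_cancel _ _ _ Ha H). ring. Qed.

Lemma const_1 : dual_const 1 = dual_1.
Proof. reflexivity. Qed.

Lemma const_m1 : dual_const (-1) = dual_opp dual_1.
Proof. apply dual_eq; simpl; ring. Qed.

Theorem theorem3p5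
  (alpha beta : R -> dvec) (sp sps : R -> dual)
  (T N B V1 V2 V3 : R -> dvec) (k tau P Q lambda Phi dPhi : R -> dual) :
  timelike_Frenet alpha sp T N B k tau ->
  spacelike_tb_Frenet beta sps V1 V2 V3 P Q ->
  Mannheim_pair alpha beta B V2 lambda ->
  dual_deriv Phi dPhi ->
  (forall t, V1 t = Vadd (Vscale (dual_sinh (Phi t)) (T t))
                         (Vscale (dual_cosh (Phi t)) (N t))) ->
  (forall t, V3 t = Vadd (Vscale (dual_cosh (Phi t)) (T t))
                         (Vscale (dual_sinh (Phi t)) (N t))) ->
  forall t,
    (* ds*/ds = sps/sp ;  ds/ds* = sp/sps ;  dPhi/ds = dPhi/dt / sp *)
    k t = dual_opp (dual_div (dPhi t) (sp t)) /\
    tau t = dual_sub (dual_mul (dual_mul (P t) (dual_cosh (Phi t))) (dual_div (sps t) (sp t)))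
                 (dual_mul (dual_mul (Q t) (dual_sinh (Phi t))) (dual_div (sps t) (sp t))) /\
    P t = dual_mul (dual_mul (tau t) (dual_cosh (Phi t))) (dual_div (sp t) (sps t)) /\
    Q t = dual_mul (dual_mul (tau t) (dual_sinh (Phi t))) (dual_div (sp t) (sps t)).
Proof.
  intros HA HB HM HP HV1 HV3 t.
  destruct HA as [Hsp [Hfa [Halpha [HT [HN HBd]]]]].
  destruct HB as [Hsps [Hfb [Hbeta [HdV1 [HdV2 HdV3]]]]].
  assert (EV1 : V1 = fun t => Vadd (Vscale (dual_sinh (Phi t)) (T t))
                         (Vscale (dual_cosh (Phi t)) (N t)))
    by (extensionality u; apply HV1).
  assert (EV3 : V3 = fun t => Vadd (Vscale (dual_cosh (Phi t)) (T t))
                         (Vscale (dual_sinh (Phi t)) (N t)))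
    by (extensionality u; apply HV3).
  rewrite EV1 in HdV1. rewrite EV3 in HdV3.
  pose proof (Vd_add _ _ _ _ (Vd_scale _ _ _ _ (dd_sinh _ _ HP) HT)
                (Vd_scale _ _ _ _ (dd_cosh _ _ HP) HN)) as D1.
  pose proof (Vd_add _ _ _ _ (Vd_scale _ _ _ _ (dd_cosh _ _ HP) HT)
                (Vd_scale _ _ _ _ (dd_sinh _ _ HP) HN)) as D3.
  pose proof (Vd_unique _ _ _ HdV1 D1 t) as E1.
  pose proof (Vd_unique _ _ _ HdV3 D3 t) as E3.
  cbv beta in E1, E3.
  rewrite (proj2 (HM t)) in E1, E3.
  destruct (Hfa t) as [TT [NN [BB [TN [TB NB]]]]].
  rewrite const_m1 in TT. rewrite const_1 in BB.
  assert (Hne : re (sp t) <> 0) by (specialize (Hsp t); lra).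
  assert (Hne' : re (sps t) <> 0) by (specialize (Hsps t); lra).
  assert (Hch : re (dual_cosh (Phi t)) <> 0) by (simpl; pose proof (cosh_pos (re (Phi t))); lra).
  pose proof (f_equal (Lip (T t)) E1) as L1.
  repeat (rewrite ?Lip_add_r, ?Lip_scale_r in L1); rewrite TT, TN, TB in L1.
  apply eq_sub in L1.
  assert (X : dual_mul (dual_cosh (Phi t)) (dual_add (dPhi t) (dual_mul (sp t) (k t))) = dual_0).
  { rewrite <- L1. ring. }
  apply mul_zero_cancel in X; [|exact Hch].
  assert (X2 : dual_mul (sp t) (k t) = dual_opp (dPhi t))
    by (transitivity (dual_sub (dual_add (dPhi t) (dual_mul (sp t) (k t))) (dPhi t)); [ring|];
        rewrite X; ring).
  pose proof (f_equal (Lip (B t)) E1) as L2.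
  repeat (rewrite ?Lip_add_r, ?Lip_scale_r in L2); rewrite (Lip_sym (B t) (T t)), (Lip_sym (B t) (N t)), TB, NB, BB in L2.
  apply eq_sub in L2.
  assert (Y : dual_mul (sps t) (P t) = dual_mul (dual_mul (dual_cosh (Phi t)) (sp t)) (tau t)).
  { apply sub_eq. rewrite <- L2. ring. }
  pose proof (f_equal (Lip (B t)) E3) as L3.
  repeat (rewrite ?Lip_add_r, ?Lip_scale_r in L3); rewrite (Lip_sym (B t) (T t)), (Lip_sym (B t) (N t)), TB, NB, BB in L3.
  apply eq_sub in L3.
  assert (Z : dual_mul (sps t) (Q t) = dual_mul (dual_mul (dual_sinh (Phi t)) (sp t)) (tau t)).
  { apply sub_eq. rewrite <- L3. ring. }
  apply (dual_cancel _ _ _ Hne) in X2.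
  apply (dual_cancel _ _ _ Hne') in Y.
  apply (dual_cancel _ _ _ Hne') in Z.
  split; [rewrite X2; unfold dual_div; ring|].
  split; [|split; [rewrite Y; unfold dual_div; ring | rewrite Z; unfold dual_div; ring]].
  rewrite Y, Z. unfold dual_div.
  transitivity (dual_mul (dual_mul (dual_mul (tau t)
     (dual_sub (dual_mul (dual_cosh (Phi t)) (dual_cosh (Phi t)))
               (dual_mul (dual_sinh (Phi t)) (dual_sinh (Phi t)))))
     (dual_mul (sp t) (dual_inv (sp t)))) (dual_mul (sps t) (dual_inv (sps t)))).
  - rewrite dual_ch_sh, (dual_mul_inv _ Hne), (dual_mul_inv _ Hne'). ring.
  - ring.
Qed.
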